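(* Two groups $k,k'\in[K]$ are oracle-equivalent if and only if the optimal loss $l^*((1-\alpha)\mathbf{e}_k+\alpha\mathbf{e}_{k'})$ is constant for all $\alpha\in[0,1]$.
   Context: $K$ groups with fixed distributions $D_k$ over $\mathcal{X}\times\mathcal{Y}$; hypothesis class $\mathcal{H}$, loss $\mathcal{L}:\mathcal{Y}\times\mathcal{Y}\to\mathbb{R}$. For $\mathbf{p}\in\Delta^K$, $D_{\mathbf{p}}=\sum_jp_jD_j$, $\mathcal{L}_{\mathbf{p}}(h)=\mathbb{E}_{D_{\mathbf{p}}}[\mathcal{L}(h(x),y)]$, $\mathcal{L}_{D_j}(h)=\mathcal{L}_j(h)=\mathbb{E}_{D_j}[\mathcal{L}(h(x),y)]$, and $l^*(\mathbf{p})=\min_{h\in\mathcal{H}}\mathcal{L}_{\mathbf{p}}(h)$ (minima assumed attained). $\mathbf{e}_j$ is the $j$-th vertex of the simplex. A set $K^*\subseteq[K]$ is oracle-equivalent if there exists $h\in\bigcap_{j\in K^*}\arg\min_{h'\in\mathcal{H}}\mathcal{L}_{D_j}(h')$ with $\mathcal{L}_{j_1}(h)=\mathcal{L}_{j_2}(h)$ for all $j_1,j_2\in K^*$. *)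

(* Defs.v *)
From HB Require Import structures.
From mathcomp Require Import all_boot all_order all_algebra.
From mathcomp Require Import all_classical all_reals all_analysis.
Set Implicit Arguments. Unset Strict Implicit. Unset Printing Implicit Defensive.
Import Order.TTheory GRing.Theory Num.Theory.
Local Open Scope classical_set_scope.
Local Open Scope ring_scope.

Definition simplex (R : realType) (K : nat) : set ('I_K -> R) :=
  [set p | (forall j, 0 <= p j) /\ \sum_(j < K) p j = 1].

Definition vertex (R : realType) (K : nat) (j : 'I_K) : 'I_K -> R :=
  fun i => (i == j)%:R.
Arguments simplex R K : clear implicits.
Arguments vertex R {K} j.

(* Mixture D_p = sum_j p_j D_j of measures.  The weights are clipped at 0
   (max (p j) 0) only so that D_p is a measure for every p; on the simplex
   this is exactly sum_j p_j D_j. *)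
Section mixture.
Local Open Scope ereal_scope.
Context d (T : measurableType d) (R : realType) (K : nat).
Variables (D : 'I_K -> {measure set T -> \bar R}) (p : 'I_K -> R).

Definition mixture (A : set T) : \bar R :=
  \sum_(j < K) (Num.max (p j) 0%R)%:E * D j A.

Let mixture0 : mixture set0 = 0.
Proof. by rewrite /mixture big1// => j _; rewrite measure0 mule0. Qed.

Let mixture_ge0 B : 0 <= mixture B.
Proof.
rewrite /mixture; apply: sume_ge0 => j _; apply: mule_ge0 => //.
by rewrite lee_fin le_max lexx orbT.
Qed.

Let mixture_sigma_additive : semi_sigma_additive mixture.
Proof.
move=> F mF tF mUF.
have w0 j : (0 <= Num.max (p j) 0)%R by rewrite le_max lexx orbT.
pose m := msum (fun n => if (n < K)%N =P true is ReflectT h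
  then mscale (NngNum (w0 (Ordinal h))) (D (Ordinal h)) else mzero) K.
have -> : mixture = m.
  apply/funext => A; rewrite /m /= /msum /mixture; apply: eq_bigr => j _.
  case: eqP => h /=; last by rewrite ltn_ord in h.
  rewrite /mscale /=; have -> : Ordinal h = j by exact: val_inj.
  by [].
exact: measure_semi_sigma_additive.
Qed.

HB.instance Definition _ := isMeasure.Build _ _ _ mixture
  mixture0 mixture_ge0 mixture_sigma_additive.

End mixture.

Section losses.
Local Open Scope ereal_scope.
Context (R : realType) (dX dY : measure_display)
  (X : measurableType dX) (Y : measurableType dY) (K : nat)
  (D : 'I_K -> probability (X * Y)%type R)
  (H : set (X -> Y)) (loss : Y -> Y -> R).

Definition groupLoss (j : 'I_K) (h : X -> Y) : \bar R :=
  \int[D j]_z (loss (h z.1) z.2)%:E.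

Definition mixLoss (p : 'I_K -> R) (h : X -> Y) : \bar R :=
  \int[mixture (fun j => D j) p]_z (loss (h z.1) z.2)%:E.

(* l^*(p) = min_{h in H} L_p(h) (written as an infimum; minima are assumed
   attained in the theorem, so it is a minimum). *)
Definition optLoss (p : 'I_K -> R) : \bar R :=
  ereal_inf [set mixLoss p h | h in H].

Definition argminGroup (j : 'I_K) : set (X -> Y) :=
  [set h | H h /\ forall h', H h' -> groupLoss j h <= groupLoss j h'].

Definition oracle_equivalent (Kstar : set 'I_K) : Prop :=
  exists h, (forall j, Kstar j -> argminGroup j h) /\
    (forall j1 j2, Kstar j1 -> Kstar j2 -> groupLoss j1 h = groupLoss j2 h).

End losses.

(* Main.v *)
Require Import Defs.
From HB Require Import structures.
From mathcomp Require Import all_boot all_order all_algebra.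
From mathcomp Require Import all_classical all_reals all_analysis.
From mathcomp Require Import measurable_realfun.
From mathcomp Require Import ring lra.
Import Order.TTheory GRing.Theory Num.Theory.
Local Open Scope classical_set_scope.
Local Open Scope ring_scope.

Section S.
Local Open Scope ereal_scope.
Context d (T : measurableType d) (R : realType) (K : nat)
  (D : 'I_K -> {measure set T -> \bar R}) (p : 'I_K -> R).

Lemma ge0_mix (g : T -> \bar R) : (forall x, 0 <= g x) -> measurable_fun [set: T] g ->
  \int[mixture D p]_x g x = \sum_(j < K) (Num.max (p j) 0%R)%:E * \int[D j]_x g x.
Proof.
move=> g0 mg.
have w0 j : (0 <= Num.max (p j) 0)%R by rewrite le_max lexx orbT.
pose m := msum (fun n => if (n < K)%N =P true is ReflectT h
  then mscale (NngNum (w0 (Ordinal h))) (D (Ordinal h)) else mzero) K.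
rewrite (eq_measure_integral m); last first.
  move=> A _ _; rewrite /m /= /msum /mixture; apply: eq_bigr => j _.
  case: eqP => h /=; last by rewrite ltn_ord in h.
  rewrite /mscale /=; have -> : Ordinal h = j by exact: val_inj.
  by [].
rewrite ge0_integral_measure_sum//; apply: eq_bigr => j _.
case: eqP => h /=; last by rewrite ltn_ord in h.
rewrite ge0_integral_mscale//=; have -> : Ordinal h = j by exact: val_inj.
by [].
Qed.

Lemma int_mix (j0 : 'I_K) (f : T -> R) : (forall j, (D j).-integrable setT (fun z => (f z)%:E)) ->
  \int[mixture D p]_x (f x)%:E = \sum_(j < K) (Num.max (p j) 0%R)%:E * \int[D j]_x (f x)%:E.
Proof.
move=> fi.
have mf : measurable_fun [set: T] (fun z => (f z)%:E).
  by case/integrableP: (fi j0).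
rewrite integralE ge0_mix//; last exact: measurable_funepos.
rewrite ge0_mix//; last exact: measurable_funeneg.
have Ep j : \int[D j]_x (fun z => (f z)%:E)^\+ x = (fine (\int[D j]_x (fun z => (f z)%:E)^\+ x))%:E.
  by rewrite fineK// integrable_pos_fin_num.
have En j : \int[D j]_x (fun z => (f z)%:E)^\- x = (fine (\int[D j]_x (fun z => (f z)%:E)^\- x))%:E.
  by rewrite fineK// integrable_neg_fin_num.
under eq_bigr => j _ do rewrite Ep -EFinM.
under [X in _ - X = _]eq_bigr => j _ do rewrite En -EFinM.
under [RHS]eq_bigr => j _ do rewrite integralE Ep En -EFinB -EFinM.
rewrite !sumEFin -EFinB -sumrB; congr EFin; apply: eq_bigr => j _.
by rewrite mulrBr.
Qed.
End S.
Lemma sum_ind (R : realType) (K : nat) (k k' : 'I_K) (a b : R) (x : 'I_K -> R) :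
  \sum_(j < K) (a * vertex R k j + b * vertex R k' j) * x j = a * x k + b * x k'.
Proof.
have E (k0 : 'I_K) : \sum_(j < K) vertex R k0 j * x j = x k0.
  rewrite (bigD1 k0)//= big1 => [|j /negbTE hj]; last by rewrite /vertex hj mul0r.
  by rewrite /vertex eqxx mul1r addr0.
under eq_bigr do rewrite mulrDl -!mulrA.
by rewrite big_split /= -!mulr_sumr !E.
Qed.

Section Main.
Context (R : realType) (dX dY : measure_display)
  (X : measurableType dX) (Y : measurableType dY) (K : nat)
  (D : 'I_K -> probability (X * Y)%type R)
  (H : set (X -> Y)) (loss : Y -> Y -> R)
  (Hint : forall (j : 'I_K) (h : X -> Y), H h ->
     (D j).-integrable setT (fun z => (loss (h z.1) z.2)%:E)).

Definition Lr j h := fine (groupLoss D loss j h).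

Lemma Ef j h : H h -> groupLoss D loss j h = (Lr j h)%:E.
Proof. by move=> Hh; rewrite /Lr fineK// /groupLoss integrable_fin_num// Hint. Qed.

Lemma mixLoss_alpha (k k' : 'I_K) (alpha : R) h : 0 <= alpha <= 1 -> H h ->
  mixLoss D loss (fun i => (1 - alpha) * vertex R k i + alpha * vertex R k' i) h
  = ((1 - alpha) * Lr k h + alpha * Lr k' h)%:E.
Proof.
move=> /andP[a0 a1] Hh.
rewrite /mixLoss (@int_mix _ _ _ _ _ _ k); last by move=> j; exact: Hint.
under eq_bigr => j _.
  rewrite (_ : Num.max _ _ = (1 - alpha) * vertex R k j + alpha * vertex R k' j); last first.
    apply/max_idPl; apply: addr_ge0; apply: mulr_ge0; rewrite /vertex ?ler0n //; lra.
  rewrite -/(groupLoss D loss j h) Ef // -EFinM.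
  over.
by rewrite sumEFin sum_ind.
Qed.

End Main.
Arguments Lr {R dX dY X Y K} D loss j h.

Theorem proposition8 (R : realType) (dX dY : measure_display)
  (X : measurableType dX) (Y : measurableType dY) (K : nat)
  (D : 'I_K -> probability (X * Y)%type R)
  (H : set (X -> Y)) (loss : Y -> Y -> R)
  (Hint : forall (j : 'I_K) (h : X -> Y), H h ->
     (D j).-integrable setT (fun z => (loss (h z.1) z.2)%:E))
  (Hattained : forall p : 'I_K -> R, simplex R K p ->
     exists2 h, H h &
       forall h', H h' -> (mixLoss D loss p h <= mixLoss D loss p h')%E)
  (k k' : 'I_K) :
  oracle_equivalent D H loss [set k; k'] <->
  exists c : \bar R, forall alpha : R, 0 <= alpha <= 1 ->
    optLoss D H loss
      (fun i => (1 - alpha) * vertex R k i + alpha * vertex R k' i) = c.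
Proof.
have E := @Ef _ _ _ _ _ _ _ _ _ Hint; have M := @mixLoss_alpha _ _ _ _ _ _ _ _ _ Hint.
split.
- move=> [h [hmin heq]].
  have [Hh Hk] := hmin k (or_introl erefl).
  have [_ Hk'] := hmin k' (or_intror erefl).
  have Lkk : Lr D loss k h = Lr D loss k' h.
    by rewrite /Lr (heq k k') //; [left|right].
  exists (groupLoss D loss k h) => alpha a01.
  have /andP[a0 a1] := a01.
  apply/le_anti/andP; split.
    apply: ereal_inf_lbound; exists h => //.
    by rewrite M // E //; congr EFin; rewrite -Lkk; ring.
  apply/ereal_infP => _ [h' Hh' <-].
  rewrite M // E // lee_fin.
  have := Hk h' Hh'; have := Hk' h' Hh'; rewrite !E // !lee_fin => h1 h2.
  nra.
- move=> [c Hc].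
  have h01 : 0 <= (1/2 : R) <= 1.
    by apply/andP; split; lra.
  have Sq : simplex R K (fun i => (1 - 1/2) * vertex R k i + 1/2 * vertex R k' i).
    split.
      move=> j; apply: addr_ge0; apply: mulr_ge0; rewrite /vertex ?ler0n //; lra.
    transitivity (\sum_(j < K) ((1 - 1/2) * vertex R k j + 1/2 * vertex R k' j) * 1).
      by apply: eq_bigr => j _; rewrite mulr1.
    rewrite sum_ind; lra.
  have [h Hh hmin] := Hattained _ Sq.
  have ceq : c = mixLoss D loss (fun i => (1 - 1/2) * vertex R k i + 1/2 * vertex R k' i) h.
    rewrite -(Hc (1/2) h01); apply/le_anti/andP; split.
      by apply: ereal_inf_lbound; exists h.
    by apply/ereal_infP => _ [h' Hh' <-]; exact: hmin.
  have lb (alpha : R) : 0 <= alpha <= 1 -> forall h', H h' ->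
      (c <= ((1 - alpha) * Lr D loss k h' + alpha * Lr D loss k' h')%:E)%E.
    move=> a01 h' Hh'; rewrite -(Hc alpha a01) -M //.
    by apply: ereal_inf_lbound; exists h'.
  have lb0 h' : H h' -> (c <= (Lr D loss k h')%:E)%E.
    move=> Hh'; have := lb 0 ltac:(apply/andP; split; lra) h' Hh'.
    by rewrite subr0 mul1r mul0r addr0.
  have lb1 h' : H h' -> (c <= (Lr D loss k' h')%:E)%E.
    move=> Hh'; have := lb 1 ltac:(apply/andP; split; lra) h' Hh'.
    by rewrite subrr mul0r mul1r add0r.
  rewrite M // in ceq; rewrite ceq in lb0 lb1.
  have e1 := lb0 h Hh; have e2 := lb1 h Hh; rewrite lee_fin in e1 e2.
  have Lkk : Lr D loss k h = Lr D loss k' h.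
    rewrite lee_fin in e2; lra.
  exists h; split.
    move=> j [->|->]; split => // h' Hh'; rewrite !E //  lee_fin.
      by have := lb0 h' Hh'; rewrite lee_fin; lra.
    by have := lb1 h' Hh'; rewrite lee_fin; lra.
  by move=> j1 j2 [->|->] [->|->]; rewrite !E // Lkk.
Qed.
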